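(* Let $\Phi$ be an $N\times\mathcal{C}$ complex matrix with no repeated columns which is $\eta$-StRIP-able with $\eta>1/2$, let $\epsilon>0$, and assume $k<\epsilon(\mathcal{C}-1)+1$ and $N=O\left(\left(\frac{k\log\mathcal{C}}{\epsilon^2}\right)^{1/\eta}\right)$; let $\delta:=2\exp\left[-\frac{[\epsilon-(k-1)/(\mathcal{C}-1)]^2N^{\eta}}{8k}\right]$. Let $w$ be a fixed column index of $\Phi$, and let $\kappa=\{\kappa_1,\dots,\kappa_k\}$ be the first $k$ elements of a uniformly random permutation of $\{1,\dots,\mathcal{C}\}\setminus\{w\}$. Then $$\mathbb{E}\left[\left\|\frac{1}{\sqrt N}\Phi_\kappa^{\dagger}\frac{1}{\sqrt N}\varphi_w\right\|^2\right]=\frac{k}{N}\,\frac{\mathcal{C}-N}{\mathcal{C}-1},$$ where the expectation is with respect to the choice of $\kappa$.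
   Context: Columns of $\Phi$ are denoted $\varphi_1,\dots,\varphi_{\mathcal{C}}$, with entries $\varphi_j(x)$, $x=1,\dots,N$. For $0<\eta\le 1$, $\Phi$ is called $\eta$-StRIP-able if: (St1) $\sum_{j=1}^{\mathcal{C}}\varphi_j(x)\overline{\varphi_j(y)}=0$ for $x\neq y$, and $\sum_{j=1}^{\mathcal{C}}\varphi_j(x)=0$ for all $x$; (St2) the columns form a group under pointwise multiplication, whose identity is the all-ones column $\varphi_1$; (St3) for all $j\in\{2,\dots,\mathcal{C}\}$, $\left|\sum_x\varphi_j(x)\right|^2\leq N^{2-\eta}$. For a set $\kappa$ of column indices, $\Phi_\kappa$ is the $N\times|\kappa|$ submatrix of the columns indexed by $\kappa$, and $\Phi_\kappa^\dagger$ its conjugate transpose; $\|\cdot\|$ is the Euclidean norm. *)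

(* Defs.v *)
From HB Require Import structures.
From mathcomp Require Import all_boot all_order all_algebra all_fingroup.
From mathcomp Require Import complex.
From mathcomp Require Import reals sequences exp.
Set Implicit Arguments. Unset Strict Implicit. Unset Printing Implicit Defensive.
Import Order.TTheory GRing.Theory Num.Theory.
Local Open Scope ring_scope.
Local Open Scope complex_scope.

Definition phicol (R : realType) (N C : nat) (Phi : 'M[R[i]]_(N, C)) (j : 'I_C)
  : 'cV[R[i]]_N := col j Phi.

Definition adjmx (R : realType) (m n : nat) (A : 'M[R[i]]_(m, n)) : 'M[R[i]]_(n, m) :=
  (map_mx (fun z => z^*) A)^T.

Definition sqnorm (R : realType) (n : nat) (v : 'cV[R[i]]_n) : R[i] :=
  \sum_(i < n) `|v i ord0| ^+ 2.

Definition no_repeated_columns (R : realType) (N C : nat) (Phi : 'M[R[i]]_(N, C)) :=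
  injective (phicol Phi).

(* eta-StRIP-ability (indices: column 1 of the paper is the ordinal 0). *)
Definition StRIPable (R : realType) (eta : R) (N C : nat) (Phi : 'M[R[i]]_(N, C)) :=
  [/\ 0 < eta, eta <= 1,
   (forall x y : 'I_N, x != y -> \sum_(j < C) Phi x j * (Phi y j)^* = 0) /\
   (forall x : 'I_N, \sum_(j < C) Phi x j = 0),
   (* St2: columns form a group under pointwise multiplication, identity = phi_1 = all-ones *)
   [/\ forall j : 'I_C, (j : nat) = 0%N -> forall x, Phi x j = 1,
       forall j l : 'I_C, exists m : 'I_C, forall x, Phi x m = Phi x j * Phi x l
     & forall j : 'I_C, exists m : 'I_C, forall x, Phi x m * Phi x j = 1]
   &
   forall j : 'I_C, (j : nat) <> 0%N ->
     `|\sum_(x < N) Phi x j| ^+ 2 <= ((N%:R : R) `^ (2 - eta))%:C].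

(* kappa: the first k elements of the random permutation of {1..C}\{w}
   encoded by a permutation sigma of 'I_C fixing w (listing of the remaining
   indices in the order sigma j, j increasing, j <> w). *)
Definition kappa_of (C : nat) (w : 'I_C) (k : nat) (sigma : {perm 'I_C}) : 'I_k -> 'I_C :=
  fun i => nth w [seq sigma j | j <- enum 'I_C & j != w] i.

(* Uniform expectation over permutations of {1..C}\{w} (= perms fixing w). *)
Definition Eperm (R : realType) (C : nat) (w : 'I_C) (f : {perm 'I_C} -> R[i]) : R[i] :=
  (#|[set s : {perm 'I_C} | s w == w]|%:R)^-1 *
    \sum_(s : {perm 'I_C} | s w == w) f s.
Arguments kappa_of {C} w k sigma _.

(* Main.v *)
Require Import Defs.
From HB Require Import structures.
From mathcomp Require Import all_boot all_order all_algebra all_fingroup.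
From mathcomp Require Import complex.
From mathcomp Require Import reals sequences exp.
From mathcomp Require Import ring lra.
Import Order.TTheory GRing.Theory Num.Theory.
Local Open Scope ring_scope.
Local Open Scope complex_scope.

Lemma unit_mod (R : realType) N C (Phi : 'M[R[i]]_(N,C)) (w : 'I_C) :
 (forall j l : 'I_C, exists m : 'I_C, forall x, Phi x m = Phi x j * Phi x l) ->
 (forall j : 'I_C, exists m : 'I_C, forall x, Phi x m * Phi x j = 1) ->
 forall x j, `|Phi x j| = 1.
Proof.
move=> Hmul Hinv x.
pose F := fun j => complex.Re `|Phi x j|.
have Fe j : (F j)%:C = `|Phi x j| by rewrite RRe_real ?normr_real.
have F0 j : 0 <= F j by rewrite -ler0c Fe.
have FM j l m : Phi x m = Phi x j * Phi x l -> F m = F j * F l.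
  by move=> H; apply: complexI; rewrite rmorphM /= !Fe H normrM.
case: (@arg_maxP _ _ _ w predT F isT) => j0 _ Hj0'.
have Hj0 : forall l, true -> F l <= F j0 := Hj0'.
have le1 : F j0 <= 1.
  have [m Hm] := Hmul j0 j0.
  have := Hj0 m isT; rewrite (FM _ _ _ (Hm x)) => H.
  have H' : F j0 * F j0 <= F j0 := H.
  have := F0 j0; move=> ?; nra.
move=> j; rewrite -Fe.
have [m Hm] := Hinv j.
have e : F m * F j = 1.
  apply: complexI; rewrite rmorphM /= !Fe -normrM Hm normr1 //.
have := Hj0 m isT; have := Hj0 j isT; have := F0 j; have := F0 m.
move=> h1 h2 h3 h4; have h5 : F j <= 1 by apply: le_trans le1.
have h6 : F m <= 1 by apply: le_trans le1.
have -> : F j = 1 by nra.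
by [].
Qed.

Lemma perm_avg (F : nmodType) (C : nat) (w j0 : 'I_C) (g : 'I_C -> F) :
  j0 != w ->
  (\sum_(s : {perm 'I_C} | s w == w) g (s j0)) *+ C.-1 =
  (\sum_(j | j != w) g j) *+ #|[set s : {perm 'I_C} | s w == w]|.
Proof.
move=> j0w.
have step j : j != w -> \sum_(s : {perm 'I_C} | s w == w) g (s j0)
                       = \sum_(s : {perm 'I_C} | s w == w) g (s j).
  move=> jw; rewrite (reindex_inj (mulgI (tperm j0 j))) /=.
  apply: eq_big => s; first by rewrite permM tpermD // eq_sym.
  by move=> _; rewrite permM tpermL.
rewrite -[C in _ *+ C.-1]card_ord -(cardC1 w).
rewrite -[LHS]sumr_const.
rewrite [LHS](eq_bigr (fun j => \sum_(s : {perm 'I_C} | s w == w) g (s j))); last first.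
  by move=> j /= /step.
rewrite [LHS](eq_bigl (fun j => j != w)) //.
rewrite exchange_big /= -sumr_const.
rewrite [RHS](eq_bigl (fun s : {perm 'I_C} => s w == w)); last by move=> s; rewrite inE.
apply: eq_bigr => s /eqP sw.
rewrite [RHS](reindex_inj (@perm_inj _ s)) /=.
by apply: eq_bigl => j; rewrite -[in RHS]sw (inj_eq perm_inj).
Qed.

Lemma ip_sum (R : realType) N C (Phi : 'M[R[i]]_(N,C)) (w : 'I_C) :
  (forall x y : 'I_N, x != y -> \sum_(j < C) Phi x j * (Phi y j)^* = 0) ->
  (forall x j, `|Phi x j| = 1) ->
  \sum_(j | j != w) `|\sum_(x < N) (Phi x j)^* * Phi x w| ^+ 2
  = C%:R * N%:R - N%:R ^+ 2.
Proof.
move=> St1 U.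
have cc x j : Phi x j * (Phi x j)^* = 1.
  by rewrite -sqr_normc U expr1n.
have per j : `|\sum_(x < N) (Phi x j)^* * Phi x w| ^+ 2 =
   \sum_(x < N) \sum_(y < N) (Phi x w * (Phi y w)^*) * (Phi y j * (Phi x j)^*).
  rewrite sqr_normc rmorph_sum mulr_suml; apply: eq_bigr => x _.
  rewrite mulr_sumr; apply: eq_bigr => y _.
  rewrite rmorphM /= conjcK; ring.
have tot : \sum_(j < C) `|\sum_(x < N) (Phi x j)^* * Phi x w| ^+ 2 = C%:R * N%:R.
  rewrite (eq_bigr _ (fun j _ => per j)) exchange_big /=.
  rewrite (eq_bigr (fun x => C%:R)); first by rewrite sumr_const card_ord -[_ *+ N]mulr_natr.
  move=> x _; rewrite exchange_big /= (bigD1 x) //= [X in _ + X]big1; last first.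
    move=> y yx; rewrite -mulr_sumr St1 ?mulr0 //.
  rewrite addr0 -mulr_sumr cc mul1r.
  by rewrite (eq_bigr (fun _ => 1)) ?sumr_const ?card_ord // => j _; rewrite cc.
have ipw : \sum_(x < N) (Phi x w)^* * Phi x w = N%:R.
  rewrite (eq_bigr (fun _ => 1)) ?sumr_const ?card_ord // => x _.
  by rewrite mulrC cc.
rewrite -tot [in RHS](bigD1 w) //= ipw ger0_norm ?ler0n //.
by rewrite (addrC _ (\sum_(i < C | i != w) _)) addrK.
Qed.

Lemma szf_lem C (w : 'I_C) : size [seq j <- enum 'I_C | j != w] = C.-1.
Proof.
have := count_predC (pred1 w) (enum 'I_C).
rewrite (count_uniq_mem _ (enum_uniq _)) mem_enum /= add1n size_enum_ord.
by move=> /(congr1 predn) /= <-; rewrite size_filter.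
Qed.

Theorem lemma3p10 (R : realType) (N C : nat) (Phi : 'M[R[i]]_(N, C))
  (eta eps : R) (k : nat) (w : 'I_C) :
  no_repeated_columns Phi ->
  StRIPable eta Phi ->
  1 / 2 < eta ->
  0 < eps ->
  (k%:R : R) < eps * (C.-1)%:R + 1 ->
  (k <= C.-1)%N ->
  (exists c : R, 0 < c /\
     (N%:R : R) <= c * ((k%:R * ln (C%:R : R) / eps ^+ 2) `^ eta^-1)) ->
  let delta : R :=
    2 * expR (- ((eps - (k%:R - 1) / (C.-1)%:R) ^+ 2 * (N%:R `^ eta))
              / (8 * k%:R)) in
  Eperm w (fun sigma =>
    sqnorm (((Num.sqrt (N%:R : R))^-1)%:C *:
              adjmx (colsub (kappa_of w k sigma) Phi)
            *m (((Num.sqrt (N%:R : R))^-1)%:C *: phicol Phi w)))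
  = (k%:R / N%:R) * ((C%:R - N%:R) / (C.-1)%:R).
Proof.
move=> _ [_ _ [St1 _] [_ Hmul Hinv] _] _ _ _ kC _ delta.
have U := unit_mod _ _ _ _ w Hmul Hinv.
set c := ((Num.sqrt (N%:R : R))^-1)%:C.
pose g j := `|\sum_(x < N) (Phi x j)^* * Phi x w| ^+ 2.
have integ s : sqnorm (c *: adjmx (colsub (kappa_of w k s) Phi) *m (c *: phicol Phi w))
     = `|c * c| ^+ 2 * \sum_(i < k) g (kappa_of w k s i).
  rewrite /sqnorm mulr_sumr; apply: eq_bigr => i _.
  rewrite /g -exprMn -normrM; congr (`|_| ^+ 2).
  rewrite !mxE mulr_sumr; apply: eq_bigr => x _.
  rewrite /adjmx /phicol !mxE; ring.
rewrite /Eperm (eq_bigr _ (fun s _ => integ s)) -mulr_sumr.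
have [k0|kpos] := posnP k.
  subst k; rewrite big1 ?mulr0 ?mul0r //.
  by move=> s _; rewrite big_ord0.
set m := #|[set s : {perm 'I_C} | s w == w]|.
set n := C.-1.
have npos : (0 < n)%N by apply: leq_trans kC.
have nz : (n%:R : R[i]) != 0 by rewrite pnatr_eq0 -lt0n.
have m0 : (0 < m)%N by apply/card_gt0P; exists 1%g; rewrite inE perm1.
have mz : (m%:R : R[i]) != 0 by rewrite pnatr_eq0 -lt0n.
set Gs := \sum_(j | j != w) g j.
have szf : size [seq j <- enum 'I_C | j != w] = n.
  exact: szf_lem.
have each (i : 'I_k) : \sum_(s : {perm 'I_C} | s w == w) g (kappa_of w k s i) = Gs * m%:R / n%:R.
  have ik : (i < size [seq j <- enum 'I_C | j != w])%N by rewrite szf (leq_trans (ltn_ord i)).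
  pose e := nth w [seq j <- enum 'I_C | j != w] i.
  have ew : e != w.
    by have := mem_nth w ik; rewrite mem_filter => /andP[].
  have H := perm_avg _ _ w e g ew.
  rewrite -[X in X = _]mulr_natr -[X in _ = X]mulr_natr in H.
  rewrite /Gs /m /n -H mulrK ?unitfE //.
  apply: eq_bigr => s _; rewrite /kappa_of (nth_map w) //.
rewrite exchange_big /= (eq_bigr _ (fun i _ => each i)) sumr_const card_ord.
rewrite /Gs ip_sum //.
have cc : c * c = (N%:R)^-1 :> R[i].
  rewrite /c -rmorphM /= -expr2 exprVn sqr_sqrtr ?ler0n //.
  by rewrite fmorphV rmorph_nat.
rewrite cc ger0_norm ?invr_ge0 ?ler0n // -[X in _ * (_ * X)]mulr_natr.
have [N0|Npos] := posnP N.
  by rewrite N0 invr0; ring.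
have Nz : (N%:R : R[i]) != 0 by rewrite pnatr_eq0 -lt0n.
by field; rewrite nz Nz mz.
Qed.
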